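(* A pargoid $\mathbf{A}=\langle A,\cdot\rangle$ is combinatorially complete if and only if (i) there exist $s,k\in A$ making $\langle A,\cdot,s,k\rangle$ a semicombinatory algebra, and (ii) either $\mathbf{A}$ is total or $\mathbf{A}$ contains a left passive element.
   Context: A pargoid is a nonempty set $A$ with a partial binary operation $\cdot$ (application); it is total if $\cdot$ is everywhere defined. Products associate to the left, $xyz=(xy)z$, and a compound product is defined only if all its sub-products are defined (strictness). Kleene equality $M\simeq N$ means: if either side is defined then both are defined and equal. An element $a\in A$ is left passive if $a\cdot x$ is undefined for every $x\in A$. The polynomial operations of $\mathbf{A}$ form the least set of partial finitary operations on $A$ containing $\cdot$, all projections $(a_0,\dots,a_{n-1})\mapsto a_i$, and all nullary constant operations with value $a\in A$, closed under composition $f(g_0,\dots,g_{n-1})(\bar x)\simeq f(g_0(\bar x),\dots,g_{n-1}(\bar x))$ (defined only if every $g_i(\bar x)$ is defined and $f$ is defined at the resulting tuple). $\mathbf{A}$ is combinatorially complete if for all $n\ge 1$ and every $n$-ary polynomial operation $p$ of $\mathbf{A}$ there is $a\in A$ such that for all $x_1,\dots,x_n\in A$, $a x_1\cdots x_n\simeq p(x_1,\dots,x_n)$. A semicombinatory algebra is a pargoid together with elements $s,k$ such that for all $x,y,z\in A$: $sxyz\simeq xz(yz)$, and $kxy$ is defined and equals $x$. *)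

(* Defs.v *)
From mathcomp Require Import all_boot.
Set Implicit Arguments. Unset Strict Implicit. Unset Printing Implicit Defensive.

Section Pargoid.
Variable A : Type.
Variable app : A -> A -> option A.

(* Left-associated iterated product a x_1 ... x_n, strict:
   defined only if every prefix product is defined. *)
Fixpoint apps (o : option A) (l : seq A) : option A :=
  match l with
  | [::] => o
  | x :: l' => apps (obind (fun u => app u x) o) l'
  end.

(* Partial n-ary operations on A are represented by their graphs:
   R x y  means  "the operation is defined at the tuple x with value y". *)
Definition pop (n : nat) := ('I_n -> A) -> A -> Prop.

(* composition f(g_0,...,g_{m-1}), strict *)
Definition pcomp (m n : nat) (f : pop m) (g : 'I_m -> pop n) : pop n :=
  fun x y => exists z : 'I_m -> A, (forall j, g j x (z j)) /\ f z y.

Inductive polyop : forall n, pop n -> Prop :=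
  | polyop_app : polyop (fun (x : 'I_2 -> A) y => app (x ord0) (x ord_max) = Some y)
  | polyop_proj n (i : 'I_n) : polyop (fun (x : 'I_n -> A) y => y = x i)
  | polyop_const (a : A) : polyop (fun (_ : 'I_0 -> A) y => y = a)
  | polyop_comp m n (f : pop m) (g : 'I_m -> pop n) :
      polyop f -> (forall j, polyop (g j)) -> polyop (pcomp f g).

Definition comb_complete : Prop :=
  forall n, 1 <= n -> forall p : pop n, polyop p ->
    exists a : A, forall (x : 'I_n -> A) (y : A),
      apps (Some a) [seq x i | i <- enum 'I_n] = Some y <-> p x y.

Definition semicombinatory (s k : A) : Prop :=
  (forall x y z : A,
     apps (Some s) [:: x; y; z] =
     obind (fun u => obind (fun v => app u v) (app y z)) (app x z))
  /\ (forall x y : A, apps (Some k) [:: x; y] = Some x).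

Definition total_pargoid : Prop := forall x y : A, exists z, app x y = Some z.

Definition left_passive (a : A) : Prop := forall x : A, app a x = None.

End Pargoid.

(* Main.v *)
Require Import Defs.
From mathcomp Require Import all_boot.
From Stdlib Require Import Classical.
Set Implicit Arguments. Unset Strict Implicit. Unset Printing Implicit Defensive.

Section Terms.
Variable A : Type.
Variable app : A -> A -> option A.

Inductive term := Var of nat | Cst of A | Ap of term & term.

Definition oapp (o1 o2 : option A) :=
  obind (fun a => obind (fun b => app a b) o2) o1.

Fixpoint eval (r : nat -> A) (t : term) : option A :=
  match t with
  | Var i => Some (r i)
  | Cst a => Some a
  | Ap t u => oapp (eval r t) (eval r u)
  end.

Lemma eval_ext r r' t : (forall i, r i = r' i) -> eval r t = eval r' t.
Proof. by move=> H; elim: t => [i|a|t IHt u IHu] //=; rewrite ?H ?IHt ?IHu. Qed.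

Variables s k : A.
Hypothesis Hsk : semicombinatory app s k.

Definition upd (r : nat -> A) n y := fun i => if i == n then y else r i.

Fixpoint lamN (n : nat) (t : term) : term :=
  match t with
  | Var i => if i == n then Ap (Ap (Cst s) (Cst k)) (Cst k) else Ap (Cst k) (Var i)
  | Cst a => Ap (Cst k) (Cst a)
  | Ap t u => Ap (Ap (Cst s) (lamN n t)) (lamN n u)
  end.

Lemma k_ax a b : exists c, app k a = Some c /\ app c b = Some a.
Proof.
have := (proj2 Hsk) a b => /=.
case: (app k a) => [c|] //= H; by exists c.
Qed.

Lemma k_app a b : oapp (oapp (Some k) (Some a)) (Some b) = Some a.
Proof. have [c [H1 H2]] := k_ax a b; by rewrite /oapp /= H1 /= H2. Qed.

Lemma s_app a b c : oapp (oapp (oapp (Some s) (Some a)) (Some b)) (Some c) =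
   obind (fun u => obind (fun v => app u v) (app b c)) (app a c).
Proof.
rewrite -(proj1 Hsk) /oapp /=.
by case: (app s a) => [x|] //=; case: (app x b).
Qed.

Lemma lamN_spec n r t y :
  oapp (eval r (lamN n t)) (Some y) = eval (upd r n y) t.
Proof.
elim: t => [i|a|t IHt u IHu].
- rewrite /= /upd; case: eqP => _.
  + have [c [H1 _]] := k_ax y y.
    have [c' [H1' H2']] := k_ax y c.
    rewrite H1 in H1'; case: H1' => ?; subst c'.
    have := s_app k k y. rewrite /oapp /= => ->. by rewrite H1 /= H2'.
  + exact: (k_app (r i) y).
- exact: (k_app a y).
- rewrite [eval (upd r n y) _]/= -IHt -IHu [lamN _ _]/= [eval r (Ap _ _)]/=.
  case: (eval r (lamN n t)) => [a|]; last first.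
    rewrite /oapp /=. by case: (app s) => // x; case: (eval r (lamN n u)) => [b|] //=; case: (app x b).
  case: (eval r (lamN n u)) => [b|]; last first.
    rewrite /oapp /=. case: (app s a) => [x|] //=; by case: (app a y).
  have := s_app a b y. rewrite /oapp /= => ->.
  by case: (app a y) => //= ?; case: (app b y).
Qed.

Fixpoint L n t := if n is n'.+1 then L n' (lamN n' t) else t.

Definition updl (r : nat -> A) (l : seq A) := fun i => nth (r i) l i.

Lemma apps_rcons o l y : apps app o (rcons l y) = obind (fun a => app a y) (apps app o l).
Proof. by elim: l o => [|x l IH] o //=. Qed.

Lemma apps_None l : apps app None l = None.
Proof. by elim: l. Qed.

Lemma chain l t r : apps app (eval r (L (size l) t)) l = eval (updl r l) t.
Proof.
elim/last_ind: l t => [|l y IH] t //=.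
  by apply: eval_ext => i; rewrite /updl nth_nil.
rewrite size_rcons /= apps_rcons IH.
have -> : obind (fun a => app a y) (eval (updl r l) (lamN (size l) t)) =
   oapp (eval (updl r l) (lamN (size l) t)) (Some y) by [].
rewrite lamN_spec; apply: eval_ext => i.
rewrite /upd /updl nth_rcons.
case: (ltngtP i (size l)) => [H|H|H].
- by [].
- by rewrite nth_default // ltnW.
- by [].
Qed.

Variable a0 : A.

Definition E n (x : 'I_n -> A) : nat -> A :=
  updl (fun _ => a0) [seq x i | i <- enum 'I_n].

Lemma E_ord n (x : 'I_n -> A) (j : 'I_n) : E x j = x j.
Proof. by rewrite /E /updl (nth_map j) ?size_enum_ord // nth_ord_enum. Qed.

Lemma E_out n (x : 'I_n -> A) i : n <= i -> E x i = a0.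
Proof. by move=> H; rewrite /E /updl nth_default // size_map size_enum_ord. Qed.

Fixpoint subst (sg : nat -> term) t :=
  match t with
  | Var i => sg i
  | Cst a => Cst a
  | Ap t u => Ap (subst sg t) (subst sg u)
  end.

Lemma subst_spec r r' sg t :
  (forall i, eval r (sg i) = Some (r' i)) -> eval r (subst sg t) = eval r' t.
Proof. by move=> H; elim: t => [i|a|t IHt u IHu] //=; rewrite ?H ?IHt ?IHu. Qed.

Definition wrap (ts : seq term) T := foldr (fun u T => Ap (Ap (Cst k) T) u) T ts.

Lemma wrap_spec r ts T y :
  eval r (wrap ts T) = Some y <-> all (fun u => isSome (eval r u)) ts /\ eval r T = Some y.
Proof.
elim: ts => [|u ts IH]; first by split => // [[]].
have -> : eval r (wrap (u :: ts) T) =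
  oapp (oapp (Some k) (eval r (wrap ts T))) (eval r u) by [].
rewrite [all _ _]/=.
case: (eval r u) => [b|] /=; last first.
  split; last by case.
  by rewrite /oapp; case: (eval r (wrap ts T)) => //= a; case: (app k a).
case E1: (eval r (wrap ts T)) => [a|].
  rewrite (_ : oapp (obind _ (Some a)) (Some b) = Some a); last exact: k_app.
  split.
    by case=> Hy; subst y; apply/IH.
  by move/IH; rewrite E1.
split; first by rewrite /oapp /=.
by move=> H; move/IH: H; rewrite E1.
Qed.

Definition APP : pop A 2 := fun x y => app (x ord0) (x ord_max) = Some y.

Lemma trans n (p : pop A n) : polyop app p ->
  exists t, forall x y, p x y <-> eval (E x) t = Some y.
Proof.
elim => {n p}.
- exists (Ap (Var 0) (Var 1)) => x y.
  have -> : eval (E x) (Ap (Var 0) (Var 1)) = app (x ord0) (x ord_max).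
    by rewrite /= -(E_ord x ord0) -(E_ord x ord_max).
  by [].
- move=> n i; exists (Var i) => x y /=; rewrite E_ord; split => [->|[]] //.
- move=> a; exists (Cst a) => x y /=; split => [->|[]] //.
- move=> m n f g _ [tf Hf] _ IHg.
  have [tg Htg] := fin_all_exists IHg.
  pose sg i := if insub i is Some j then tg j else Cst a0.
  exists (wrap [seq tg j | j <- enum 'I_m] (subst sg tf)) => x y.
  have Hs : forall z : 'I_m -> A, (forall j, g j x (z j)) ->
      eval (E x) (subst sg tf) = eval (E z) tf.
    move=> z Hz; apply: subst_spec => i; rewrite /sg.
    case: insubP => [j _ <-|]; first by rewrite E_ord; apply/Htg.
    by rewrite -leqNgt => H; rewrite E_out.
  split.
    case=> z [Hz Hfz]; apply/wrap_spec; rewrite all_map; split.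
      apply/allP => j _ /=; by move/Htg: (Hz j) => ->.
    by rewrite (Hs z Hz); apply/Hf.
  case/wrap_spec; rewrite all_map => /allP Hall Hev.
  pose z j := odflt a0 (eval (E x) (tg j)).
  have Hz : forall j, g j x (z j).
    move=> j; apply/Htg; rewrite /z.
    by move: (Hall j (mem_enum _ j)) => /=; case: (eval (E x) (tg j)).
  exists z; split => //; apply/Hf; by rewrite -(Hs z Hz).
Qed.
End Terms.

Lemma mapx (A : Type) (a0 : A) n (l : seq A) : size l = n ->
  [seq (fun i : 'I_n => nth a0 l i) i | i <- enum 'I_n] = l.
Proof.
move=> Hs; rewrite (map_comp (nth a0 l) val) val_enum_ord -Hs.
exact: mkseq_nth.
Qed.

Lemma opt_eq (A : Type) (o1 o2 : option A) :
  (forall y, o1 = Some y <-> o2 = Some y) -> o1 = o2.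
Proof.
case: o1 => [a|]; case: o2 => [b|] // H.
- by have := (H a).1 erefl; case=> ->.
- by have := (H a).1 erefl.
- by have := (H b).2 erefl.
Qed.

Definition G2 (A : Type) n (g0 g1 : pop A n) : 'I_2 -> pop A n :=
  fun j => if nat_of_ord j is 0 then g0 else g1.

Definition APPop (A : Type) (app : A -> A -> option A) : pop A 2 :=
  fun x y => app (x ord0) (x ord_max) = Some y.

Lemma app2 (A : Type) (app : A -> A -> option A) n (g0 g1 : pop A n) :
  polyop app g0 -> polyop app g1 ->
  polyop app (Defs.pcomp (APPop app) (G2 g0 g1)) /\
  forall x y, Defs.pcomp (APPop app) (G2 g0 g1) x y <->
    exists u v, g0 x u /\ g1 x v /\ app u v = Some y.
Proof.
move=> P0 P1; split.
  apply: polyop_comp; first exact: polyop_app.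
  by case=> [[|[|?]] ?].
move=> x y; split.
  case=> z [Hz Happ]; exists (z ord0), (z ord_max).
  split; first exact: (Hz ord0).
  split; first exact: (Hz ord_max).
  exact: Happ.
case=> u [v [H0 [H1 H2]]].
exists (fun j : 'I_2 => if nat_of_ord j is 0 then u else v); split => //.
by case=> [[|[|?]] ?].
Qed.

Definition C1 (A : Type) (c : A) : pop A 1 :=
  Defs.pcomp (fun (_ : 'I_0 -> A) y => y = c) (fun _ : 'I_0 => fun (x : 'I_1 -> A) y => y = x ord0).

Lemma C1P (A : Type) (app : A -> A -> option A) c :
  polyop app (C1 c) /\ forall x y, C1 c x y <-> y = c.
Proof.
split.
  apply: polyop_comp; first exact: polyop_const.
  move=> _; exact: (polyop_proj app (@ord0 0)).
move=> x y; split; first by case=> z [_ ->].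
move=> ->; exists (fun _ => c); split => //.
by case.
Qed.

Theorem theorem2 (A : Type) (HA : inhabited A) (app : A -> A -> option A) :
  comb_complete app <->
  ((exists s k : A, semicombinatory app s k) /\
   (total_pargoid app \/ exists a : A, left_passive app a)).
Proof.
case: HA => a0; split.
- move=> cc.
  have [k Hk] := cc 2 isT _ (polyop_proj app (@ord0 1)).
  have Kax : forall a b, apps app (Some k) [:: a; b] = Some a.
    move=> a b.
    have := (Hk (fun i : 'I_2 => nth a0 [:: a; b] i) a).2 erefl.
    by rewrite mapx.
  pose i0 := @Ordinal 3 0 isT. pose i1 := @Ordinal 3 1 isT. pose i2 := @Ordinal 3 2 isT.
  pose pr (i : 'I_3) := (fun (x : 'I_3 -> A) y => y = x i).
  have Pr : forall i, polyop app (pr i) by move=> i; exact: polyop_proj.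
  have [Pg0 Hg0] := app2 (Pr i0) (Pr i2).
  have [Pg1 Hg1] := app2 (Pr i1) (Pr i2).
  have [Pg Hg] := app2 Pg0 Pg1.
  have [s Hs] := cc 3 isT _ Pg.
  split.
    exists s, k; split => // a b c.
    apply: opt_eq => y.
    have := Hs (fun i : 'I_3 => nth a0 [:: a; b; c] i) y.
    rewrite mapx // => ->.
    split.
      case/Hg => u [v [/Hg0 [u1 [v1 [-> [-> Hu]]]] [/Hg1 [u2 [v2 [-> [-> Hv]]]] Huv]]].
      by rewrite /= Hu /= Hv.
    case Ha: (app a c) => [u|] //=; case Hb: (app b c) => [v|] //= Huv.
    apply/Hg; exists u, v; split.
      by apply/Hg0; exists a, c.
    split => //; by apply/Hg1; exists b, c.
  case: (classic (total_pargoid app)) => Ht; [by left | right].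
  have [a Ha] : exists a, ~ forall y, exists z, app a y = Some z.
    by apply: not_all_ex_not.
  have [b Hb] : exists b, ~ exists z, app a b = Some z.
    by apply: not_all_ex_not.
  have [Pa Ha'] := C1P app a.
  have [Pb Hb'] := C1P app b.
  have [Pc Hc] := app2 Pa Pb.
  have [e He] := cc 1 isT _ Pc.
  exists e => z.
  case Hez: (app e z) => [w|] //; exfalso.
  have := (He (fun i : 'I_1 => nth a0 [:: z] i) w).1.
  rewrite mapx //= Hez => /(_ erefl) /Hc [u [v [/Ha' -> [/Hb' -> Hab]]]].
  by apply: Hb; exists w.
- case=> [[s [k Hsk]] Hor] n Hn p Hp.
  have [t Ht] := trans Hsk a0 Hp.
  case HT: (eval app (fun _ => a0) (L s k n t)) => [a|].
    exists a => x y.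
    have := chain Hsk [seq x i | i <- enum 'I_n] t (fun _ => a0).
    rewrite size_map size_enum_ord HT => ->.
    exact: iff_sym (Ht x y).
  case: Hor => [Htot|[e He]].
    suff : forall r t, exists v, eval app r t = Some v.
      by move/(_ (fun _ => a0) (L s k n t)) => [v]; rewrite HT.
    move=> r; elim => [i|c|u [v1 Hv1] w [v2 Hv2]] /=; try by eexists.
    rewrite /oapp Hv1 Hv2 /=; exact: Htot.
  exists e => x y.
  have := chain Hsk [seq x i | i <- enum 'I_n] t (fun _ => a0).
  rewrite size_map size_enum_ord HT apps_None => H0.
  have : apps app (Some e) [seq x i | i <- enum 'I_n] = None.
    case El: [seq x i | i <- enum 'I_n] => [|z l'].
      by move: (congr1 size El); rewrite size_map size_enum_ord => H; rewrite H in Hn.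
    by rewrite /= He apps_None.
  move=> ->; split => // /Ht; by rewrite -H0.
Qed.
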